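(* Let $k>1$, $\gamma>0$, $\delta>1$, and let $Z=\{(\tau,s)\in\mathcal C: g(\tau,s)=0\}$. (A) If $1<\delta<\Phi$ and $\gamma>\gamma_+(\delta)$, then for every $\tau\in(0,1]$ the set $Z\cap(\{\tau\}\times S^1)$ has exactly two points, $Z$ contains no fold point, and $Z$ has exactly two connected components, each meeting every circle $\{\tau\}\times S^1$, $\tau\in(0,1]$, in exactly one point. (B) If $1<\delta<\Phi$ and $0<\gamma<\gamma_+(\delta)$, then there are $0<\tau_1<\tau_2<1$ such that $Z\cap(\{\tau\}\times S^1)$ has exactly two points for $\tau\in(0,\tau_1)\cup(\tau_2,1]$, is the single point $(\tau,\pi/2)$ for $\tau\in\{\tau_1,\tau_2\}$, and is empty for $\tau\in(\tau_1,\tau_2)$; $(\tau_1,\pi/2)$ is a subcritical fold point and $(\tau_2,\pi/2)$ is a supercritical fold point; $Z$ has exactly two connected components, one contained in $\{\tau\le\tau_1\}$ and one in $\{\tau\ge\tau_2\}$. (C) If $\delta>\Phi$, then there is $\tau_0\in(0,1)$ such that $Z\cap(\{\tau\}\times S^1)$ is empty for $\tau<\tau_0$, is the single point $(\tau_0,\pi/2)$ for $\tau=\tau_0$, and has exactly two points for $\tau\in(\tau_0,1]$; $(\tau_0,\pi/2)$ is a supercritical fold point and $Z$ is connected.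
   Context: Let $S^1=\mathbb R/2\pi\mathbb Z$ and $\mathcal C=\{(\tau,s):0<\tau\le1,\ s\in S^1\}$. Let $p(\delta)=-\delta^2+\delta+1$, $\Phi=(1+\sqrt5)/2$. For parameters $\delta>1$, $\gamma>0$, $k>0$ define $g:\mathcal C\to\mathbb R$, $g(\tau,s)=\tau^{\delta^2}+\gamma\tau^{\delta^2-\delta}(1+k\sin s)-\tau$; thus $g(\tau,s)=0$ iff $\gamma(1+k\sin s)=\mathcal F_\delta(\tau)$, where $\mathcal F_\delta(\tau)=\tau^{p(\delta)}-\tau^\delta$. For $1<\delta<\Phi$, $M_{\mathcal F}(\delta)=\max_{(0,1]}\mathcal F_\delta>0$, and $\gamma_+(\delta)=M_{\mathcal F}(\delta)/(1+k)$. A fold point is a point $(\tau_0,s_0)\in\mathcal C$ with $g(\tau_0,s_0)=0$ and $\partial g/\partial s(\tau_0,s_0)=0$. It is supercritical if there is a neighbourhood $U$ of $(\tau_0,s_0)$ such that for $\tau>\tau_0$ close to $\tau_0$ the set $\{s:(\tau,s)\in U,\ g(\tau,s)=0\}$ has exactly two elements, for $\tau=\tau_0$ exactly one, and for $\tau<\tau_0$ close to $\tau_0$ none; subcritical if the same holds with the roles of $\tau>\tau_0$ and $\tau<\tau_0$ interchanged. *)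

(* Defs.v *)
From HB Require Import structures.
From mathcomp Require Import all_boot all_order all_algebra.
From mathcomp Require Import all_classical all_reals all_analysis.
Set Implicit Arguments. Unset Strict Implicit. Unset Printing Implicit Defensive.
Import Order.TTheory GRing.Theory Num.Theory.
Import numFieldNormedType.Exports.
Local Open Scope classical_set_scope.
Local Open Scope ring_scope.

Section Defs.
Variable R : realType.

Definition pdelta (d : R) : R := - d ^+ 2 + d + 1.

Definition Phi : R := (1 + Num.sqrt 5) / 2.

Definition Fdelta (d t : R) : R := t `^ (pdelta d) - t `^ d.

(* M_F(delta) = max_{(0,1]} F_delta, written as the supremum of the values
   (the paper asserts the max is attained). *)
Definition MF (d : R) : R := sup [set Fdelta d t | t in `]0, 1]].

Definition gamma_plus (k d : R) : R := MF d / (1 + k).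

Definition gfun (d gam k : R) (t s : R) : R :=
  t `^ (d ^+ 2) + gam * t `^ (d ^+ 2 - d) * (1 + k * sin s) - t.

(* The cylinder C = (0,1] x S^1, S^1 = R/2piZ, is realised homeomorphically
   inside R x R^2 by (tau, s mod 2pi) |-> (tau, (cos s, sin s)). *)
Definition emb (t s : R) : R * (R * R) := (t, (cos s, sin s)).

Definition Zs (d gam k : R) : set (R * (R * R)) :=
  [set q | exists t s, [/\ 0 < t <= 1, gfun d gam k t s = 0 & q = emb t s]].

Definition fiber (A : set (R * (R * R))) (t : R) : set (R * R) :=
  [set p | A (t, p)].

Definition two_points (X : set (R * R)) : Prop :=
  exists p1 p2, p1 <> p2 /\ X = [set p1; p2].

Definition one_point (X : set (R * R)) : Prop := exists p, X = [set p].

Definition fold_point (d gam k t0 s0 : R) : Prop :=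
  [/\ 0 < t0 <= 1, gfun d gam k t0 s0 = 0 &
      derive1 (fun s => gfun d gam k t0 s) s0 = 0].

Definition local_fiber (d gam k : R) (U : set (R * (R * R))) (t : R) :=
  [set p | Zs d gam k (t, p) /\ U (t, p)].

Definition supercritical_fold (d gam k t0 s0 : R) : Prop :=
  fold_point d gam k t0 s0 /\
  exists U, nbhs (emb t0 s0) U /\
  exists2 e : R, 0 < e &
    [/\ forall t, t0 < t < t0 + e -> two_points (local_fiber d gam k U t),
        one_point (local_fiber d gam k U t0) &
        forall t, t0 - e < t < t0 -> local_fiber d gam k U t = set0].

Definition subcritical_fold (d gam k t0 s0 : R) : Prop :=
  fold_point d gam k t0 s0 /\
  exists U, nbhs (emb t0 s0) U /\
  exists2 e : R, 0 < e &
    [/\ forall t, t0 - e < t < t0 -> two_points (local_fiber d gam k U t),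
        one_point (local_fiber d gam k U t0) &
        forall t, t0 < t < t0 + e -> local_fiber d gam k U t = set0].

Definition components (A : set (R * (R * R))) : set (set (R * (R * R))) :=
  [set connected_component A x | x in A].

End Defs.

(* Main.v *)
Require Import Defs.
From HB Require Import structures.
From mathcomp Require Import all_boot all_order all_algebra.
From mathcomp Require Import all_classical all_reals all_analysis.
From mathcomp Require Import ring lra.
Set Implicit Arguments. Unset Strict Implicit. Unset Printing Implicit Defensive.
Import Order.TTheory GRing.Theory Num.Theory.
Import numFieldNormedType.Exports.
Local Open Scope classical_set_scope.
Local Open Scope ring_scope.


Section Circle.
Variable R : realType.

Definition circ (y : R) : set (R * R) := [set p | p.1 ^+ 2 + p.2 ^+ 2 = 1 /\ p.2 = y].

Lemma circ_two (y : R) : -1 < y < 1 ->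
  circ y = [set (Num.sqrt (1 - y ^+ 2), y); (- Num.sqrt (1 - y ^+ 2), y)].
Proof.
move=> /andP[y1 y2]; have h : 0 <= 1 - y ^+ 2 by nra.
apply/seteqP; split => -[a b] /=.
- rewrite /circ /= => -[hab hb]; subst b.
  have ha : a ^+ 2 = 1 - y ^+ 2 by lra.
  have [a0|a0] := leP 0 a.
    by left; rewrite -ha sqrtr_sqr ger0_norm.
  by right; rewrite -ha sqrtr_sqr ltr0_norm // opprK.
- rewrite /circ /= => -[[-> ->]|[-> ->]]; split => //.
    by rewrite sqr_sqrtr //; lra.
  by rewrite sqrrN sqr_sqrtr //; lra.
Qed.

Lemma two_points_circ (y : R) : -1 < y < 1 -> two_points (circ y).
Proof.
move=> hy; rewrite circ_two //; eexists; eexists; split; last reflexivity.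
case=> /eqP; rewrite -subr_eq0 opprK -mulr2n mulrn_eq0 /= sqrtr_eq0 => h.
case/andP: hy => y1 y2; nra.
Qed.

Lemma circ1 : circ 1 = [set (cos (pi / 2), sin (pi / 2))].
Proof.
rewrite cos_pihalf sin_pihalf; apply/seteqP; split => -[a b] /=.
- rewrite /circ /= => -[hab hb]; subst b; congr (_, _).
  by apply/eqP; rewrite -sqrf_eq0; apply/eqP; lra.
- by move=> [-> ->]; rewrite /circ /=; split => //; rewrite expr0n /= add0r expr1n.
Qed.

Lemma circ_gt1 (y : R) : 1 < y -> circ y = set0.
Proof.
move=> y1; apply/seteqP; split => -[a b] //=; rewrite /circ /= => -[hab hb].
have : 0 <= a ^+ 2 by exact: sqr_ge0.
nra.
Qed.

Lemma circ_ge (y : R) : circ y !=set0 -> y <= 1.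
Proof.
case=> -[a b] [/= hab hb]; subst b; have : 0 <= a ^+ 2 by exact: sqr_ge0.
nra.
Qed.

Lemma circ_exists_angle (x y : R) : x ^+ 2 + y ^+ 2 = 1 ->
  exists s, cos s = x /\ sin s = y.
Proof.
move=> hxy.
have hx : -1 <= x <= 1.
  have : 0 <= y ^+ 2 by exact: sqr_ge0.
  move=> h; apply/andP; split; nra.
have hs : Num.sqrt (1 - x ^+ 2) = `|y|.
  by rewrite -sqrtr_sqr; congr Num.sqrt; lra.
have [y0|y0] := leP 0 y.
  exists (acos x); split; first by rewrite acosK // in_itv.
  by rewrite sin_acos // hs ger0_norm.
exists (- acos x); split; first by rewrite cosN acosK // in_itv.
by rewrite sinN sin_acos // hs ltr0_norm // opprK.
Qed.

End Circle.

Section Main.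
Variables (R : realType) (k gam d : R).
Hypotheses (hk : 1 < k) (hg : 0 < gam) (hd : 1 < d).
Ltac hyps := have hk1 := hk; have hg1 := hg; have hd1 := hd.

Definition cc (t : R) : R := (Fdelta d t / gam - 1) / k.

Lemma gfun_eq (t s : R) : 0 < t ->
  gfun d gam k t s = t `^ (d ^+ 2 - d) * (gam * (1 + k * sin s) - Fdelta d t).
Proof.
move=> t0.
have nz : forall a b : R, (a + b == 0) ==> (t != 0) by move=> a b; rewrite (gt_eqF t0) implybT.
have e1 : t `^ (d ^+ 2 - d) * t `^ d = t `^ (d ^+ 2) by rewrite -powRD // subrK.
have e2 : t `^ (d ^+ 2 - d) * t `^ (pdelta d) = t.
  rewrite -powRD //; rewrite [X in t `^ X](_ : _ = 1) ?powRr1 ?ltW //.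
  by rewrite /pdelta; lra.
rewrite /gfun /Fdelta -e1; set A := t `^ (d ^+ 2 - d); set B := t `^ d; set C := t `^ pdelta d.
rewrite -[X in _ - X = _]e2 -/A -/C; ring.
Qed.

Lemma gfun0_iff (t s : R) : 0 < t -> (gfun d gam k t s = 0 <-> sin s = cc t).
Proof.
move=> t0; rewrite gfun_eq //; have tp := powR_gt0 (d ^+ 2 - d) t0.
hyps; have k0 : 0 < k by lra.
split.
- move/eqP; rewrite mulf_eq0 (gt_eqF tp) /= subr_eq0 => /eqP h.
  rewrite /cc -h; field; apply/andP; split; rewrite gt_eqF //.
- move=> h; rewrite h /cc; apply/eqP; rewrite mulf_eq0; apply/orP; right.
  apply/eqP; field; apply/andP; split; rewrite gt_eqF //.
Qed.

Lemma Zs_iff (t x y : R) : Zs d gam k (t, (x, y)) <->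
  [/\ 0 < t <= 1, x ^+ 2 + y ^+ 2 = 1 & y = cc t].
Proof.
split.
- case=> t' [s [/andP[t0 t1] hg0 [-> -> ->]]].
  split; first by rewrite t0 t1.
    exact: cos2Dsin2.
  by apply/gfun0_iff.
- case=> /andP[t0 t1] hxy hy; have [s [hc hs]] := circ_exists_angle hxy.
  exists t, s; split; first by rewrite t0 t1.
    by apply/gfun0_iff => //; rewrite hs.
  by rewrite /emb hc hs.
Qed.

Lemma fiber_in (t : R) : 0 < t <= 1 -> fiber (Zs d gam k) t = circ (cc t).
Proof.
move=> ht; apply/seteqP; split => -[x y]; rewrite /fiber /circ /=.
- by move/Zs_iff => [_ h1 h2].
- by move=> [h1 h2]; apply/Zs_iff.
Qed.

Lemma fiber_out (t : R) : ~ (0 < t <= 1) -> fiber (Zs d gam k) t = set0.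
Proof.
move=> ht; apply/seteqP; split => -[x y] //; rewrite /fiber /=.
by move/Zs_iff => [h _ _].
Qed.

Lemma gfun_derive (t s : R) : derive1 (fun s => gfun d gam k t s) s =
  gam * t `^ (d ^+ 2 - d) * k * cos s.
Proof.
have -> : (fun s => gfun d gam k t s) =
  cst (t `^ (d ^+ 2) + gam * t `^ (d ^+ 2 - d) - t) + (gam * t `^ (d ^+ 2 - d) * k) \*: (@sin R).
  apply/funext => u; rewrite /gfun !fctE /cst /=; rewrite /GRing.scale /=. ring.
by rewrite derive1E derive_val add0r.
Qed.

End Main.

Section Anal.
Variables (R : realType) (d : R).
Hypotheses (hd : 1 < d).
Ltac hyps := have hd1 := hd.

Local Notation p := (pdelta d).
Local Notation F := (Fdelta d).

Lemma p_lt_d : p < d.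
Proof. hyps; rewrite /pdelta; nra. Qed.

Lemma phi_pos : d < Phi R -> 0 < p.
Proof.
hyps; rewrite /Phi /pdelta => h.
have r5 : Num.sqrt 5 ^+ 2 = 5 :> R by rewrite sqr_sqrtr.
have r0 : 0 <= Num.sqrt 5 :> R by [].
nra.
Qed.

Lemma phi_neg : Phi R < d -> p < 0.
Proof.
hyps; rewrite /Phi /pdelta => h.
have r5 : Num.sqrt 5 ^+ 2 = 5 :> R by rewrite sqr_sqrtr.
have r0 : 0 <= Num.sqrt 5 :> R by [].
nra.
Qed.

Lemma F_ge0 (t : R) : 0 < t <= 1 -> 0 <= F t.
Proof.
move=> ht; rewrite /Fdelta subr_ge0; apply: ger_powR => //.
exact: ltW p_lt_d.
Qed.

Lemma F1 : F 1 = 0.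
Proof. by rewrite /Fdelta !powR1 subrr. Qed.

Lemma F_le1 (t : R) : 0 <= p -> 0 < t <= 1 -> F t <= 1.
Proof.
move=> p0 ht; rewrite /Fdelta.
have h1 : t `^ p <= 1 by rewrite -(powRr0 t); apply: ger_powR.
have h2 := powR_ge0 t d; lra.
Qed.

Lemma F_is_derive (t : R) : 0 < t ->
  is_derive t 1 F (p * t `^ (p - 1) - d * t `^ (d - 1)).
Proof.
move=> t0.
have -> : F = (@powR R ^~ p) - (@powR R ^~ d) by apply/funext => u.
by apply: is_deriveB; apply: is_derive1_powR.
Qed.

Lemma F_derive1 (t : R) : 0 < t -> derive1 F t = p * t `^ (p - 1) - d * t `^ (d - 1).
Proof. by move=> t0; rewrite derive1E; have := F_is_derive t0 => H; rewrite derive_val. Qed.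

Lemma F_derivable (t : R) : 0 < t -> derivable F t 1.
Proof. by move=> t0; have := F_is_derive t0 => -[]. Qed.

Lemma F_cont (t : R) : 0 < t -> {for t, continuous F}.
Proof.
move=> t0; apply/differentiable_continuous; rewrite -derivable1_diffP.
exact: F_derivable.
Qed.

Lemma F_within (i : interval R) : {subset i <= `]0, +oo[} ->
  {within [set` i], continuous F}.
Proof.
move=> sub; apply: continuous_in_subspaceT => x /[1!inE] xi.
by apply: F_cont; have := sub _ xi; rewrite in_itv /= andbT.
Qed.

Lemma F_deriv_fact (t : R) : 0 < t ->
  p * t `^ (p - 1) - d * t `^ (d - 1) = t `^ (p - 1) * (p - d * t `^ (d - p)).
Proof.
move=> t0; have e : t `^ (d - 1) = t `^ (p - 1) * t `^ (d - p).
  by rewrite -powRD ?(gt_eqF t0) ?implybT //; congr (_ `^ _); ring.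
rewrite e; ring.
Qed.

Lemma F_decrC : p < 0 -> {in `]0, 1] &, {homo F : x y /~ x < y}}.
Proof.
hyps; move=> p0; apply: ltr0_derive1_lt_oc.
- by move=> x; rewrite in_itv /= => /andP[x0 _]; exact: F_derivable.
- move=> x; rewrite in_itv /= => /andP[x0 _]; rewrite F_derive1 //.
  have := powR_gt0 (p - 1) x0; have := powR_gt0 (d - 1) x0; nra.
- by apply: F_within => x; rewrite !in_itv /= => /andP[-> _].
Qed.

Definition tm := (p / d) `^ (d - p)^-1.

Lemma q_gt0 : 0 < d - p.
Proof. by have := p_lt_d; rewrite subr_gt0. Qed.

Lemma tm_gt0 : 0 < p -> 0 < tm.
Proof. hyps; move=> p0; apply: powR_gt0; apply: divr_gt0 => //; lra. Qed.

Lemma tm_q : 0 < p -> tm `^ (d - p) = p / d.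
Proof.
move=> p0; rewrite /tm -powRrM mulVf ?powRr1 //.
  hyps; apply: divr_ge0; lra.
by rewrite gt_eqF // q_gt0.
Qed.

Lemma tm_lt1 : 0 < p -> tm < 1.
Proof.
hyps; move=> p0; have e0 : 0 < (d - p)^-1 by rewrite invr_gt0 q_gt0.
have := @gt0_ltr_powR R _ e0 (p / d) 1.
rewrite powR1; apply; rewrite ?nnegrE //.
  apply: divr_ge0; lra.
have := p_lt_d; rewrite ltr_pdivrMr; lra.
Qed.

Lemma lt_tm (t : R) : 0 < p -> 0 <= t -> t < tm -> t `^ (d - p) < p / d.
Proof.
move=> p0 t0 ht; rewrite -tm_q //; apply: gt0_ltr_powR => //; rewrite ?nnegrE //.
  exact: q_gt0.
exact: ltW (tm_gt0 p0).
Qed.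

Lemma gt_tm (t : R) : 0 < p -> tm < t -> p / d < t `^ (d - p).
Proof.
move=> p0 ht; rewrite -tm_q //; apply: gt0_ltr_powR => //; rewrite ?nnegrE //.
  exact: q_gt0.
  exact: ltW (tm_gt0 p0).
exact: ltW (lt_trans (tm_gt0 p0) ht).
Qed.

Lemma F_incr : 0 < p -> {in `]0, tm] &, {homo F : x y / x < y}}.
Proof.
hyps; move=> p0; apply: gtr0_derive1_lt_oc.
- by move=> x; rewrite in_itv /= => /andP[x0 _]; exact: F_derivable.
- move=> x; rewrite in_itv /= => /andP[x0 x1]; rewrite F_derive1 // F_deriv_fact //.
  have h := lt_tm p0 (ltW x0) x1.
  have e : d * (p / d) = p by field; rewrite gt_eqF //; lra.
  have h2 : d * x `^ (d - p) < p by nra.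
  by apply: mulr_gt0; [exact: powR_gt0 | lra].
- by apply: F_within => x; rewrite !in_itv /= => /andP[-> _].
Qed.

Lemma F_decr : 0 < p -> {in `[tm, 1] &, {homo F : x y /~ x < y}}.
Proof.
hyps; move=> p0; apply: ltr0_derive1_lt_cc.
- move=> x; rewrite in_itv /= => /andP[x0 _]; apply: F_derivable.
  exact: lt_trans (tm_gt0 p0) x0.
- move=> x; rewrite in_itv /= => /andP[x0 x1].
  have x0' : 0 < x by exact: lt_trans (tm_gt0 p0) x0.
  rewrite F_derive1 // F_deriv_fact //.
  have h := gt_tm p0 x0.
  have e : d * (p / d) = p by field; rewrite gt_eqF //; lra.
  have h2 : p < d * x `^ (d - p) by nra.
  by rewrite pmulr_rlt0 ?powR_gt0 //; lra.
- apply: F_within => x; rewrite !in_itv /= => /andP[x0 _]; rewrite andbT.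
  exact: lt_le_trans (tm_gt0 p0) x0.
Qed.

End Anal.

Section Struct.
Variables (R : realType) (k gam d : R).
Hypotheses (hk : 1 < k) (hg : 0 < gam) (hd : 1 < d).
Ltac hyps := have hk1 := hk; have hg1 := hg; have hd1 := hd.

Local Notation p := (pdelta d).
Local Notation F := (Fdelta d).
Local Notation L := (gam * (1 + k)).

Lemma L_gt0 : 0 < L.
Proof. hyps; apply: mulr_gt0; lra. Qed.

Lemma hasSupF : 0 <= p -> has_sup [set F t | t in `]0, 1]].
Proof.
move=> p0; split.
  by exists (F 1), 1 => //=; rewrite in_itv /= ltr01 lexx.
exists 1 => _ [t /= ht <-]; apply: F_le1 => //.
Qed.

Lemma structA : d < Phi R -> gamma_plus k d < gam ->
  forall t : R, 0 < t <= 1 -> F t < L.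
Proof.
hyps; move=> hp hgam t ht; have p0 := phi_pos hd hp.
have hM : MF d < L.
  by move: hgam; rewrite /gamma_plus ltr_pdivrMr; [rewrite mulrC | lra].
apply: le_lt_trans hM; apply: (sup_upper_bound (hasSupF (ltW p0))).
by exists t => //=; rewrite in_itv.
Qed.

Lemma exists_gtL : d < Phi R -> gam < gamma_plus k d ->
  exists2 t : R, 0 < t <= 1 & L < F t.
Proof.
hyps; move=> hp hgam; have p0 := phi_pos hd hp.
have hM : L < MF d.
  by move: hgam; rewrite /gamma_plus ltr_pdivlMr; [rewrite mulrC | lra].
apply: contrapT => hn.
have : MF d <= L.
  apply: ge_sup; first by case: (hasSupF (ltW p0)).
  move=> _ [t /= ht <-]; rewrite leNgt; apply/negP => hlt; apply: hn.
  by exists t => //; move: ht; rewrite in_itv.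
lra.
Qed.

Lemma F_le_pow (t : R) : F t <= t `^ p.
Proof. rewrite /Fdelta; have := powR_ge0 t d; lra. Qed.

Lemma structB : d < Phi R -> gam < gamma_plus k d ->
  exists t1 t2 : R, [/\ 0 < t1, t1 < t2 & t2 < 1] /\
   [/\ forall t, 0 < t < t1 -> F t < L, F t1 = L,
       forall t, t1 < t < t2 -> L < F t, F t2 = L &
       forall t, t2 < t <= 1 -> F t < L].
Proof.
hyps; move=> hp hgam; have p0 := phi_pos hd hp.
have tm0 := tm_gt0 hd p0; have tm1 := tm_lt1 hd p0.
have hL := L_gt0.
have [t' /andP[t'0 t'1] Ht'] := exists_gtL hp hgam.
have HFtm : L < F (tm d).
  have [e|ne] := eqVneq t' (tm d); first by rewrite -e.
  apply: lt_trans Ht' _; have [lt|gt] := ltP t' (tm d).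
    by apply: (F_incr hd p0) => //; rewrite in_itv /= ?t'0 ?tm0 ?lexx ?ltW.
  have gt' : tm d < t' by rewrite lt_neqAle eq_sym ne gt.
  by apply: (F_decr hd p0) => //; rewrite in_itv /= ?t'1 ?lexx ?ltW ?(ltW tm1).
set e := Num.min (tm d / 2) ((L / 2) `^ p^-1).
have e0 : 0 < e by rewrite lt_min divr_gt0 //= powR_gt0 // divr_gt0.
have etm : e < tm d.
  have : e <= tm d / 2 by rewrite /e ge_min lexx.
  lra.
have Fe : F e < L.
  apply: le_lt_trans (F_le_pow e) _.
  have : e `^ p <= ((L / 2) `^ p^-1) `^ p.
    apply: ge0_ler_powR; rewrite ?nnegrE ?(ltW p0) ?(ltW e0) ?powR_ge0 //.
    by rewrite /e ge_min lexx orbT.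
  rewrite -powRrM mulVf ?gt_eqF // powRr1; last by apply: divr_ge0; lra.
  lra.
have [t1 t1i Ft1] : exists2 t1, t1 \in `[e, tm d] & F t1 = L.
  apply: IVT; first exact: ltW.
    apply: F_within => x; rewrite !in_itv /= => /andP[x0 _]; rewrite andbT.
    exact: lt_le_trans e0 x0.
  rewrite ge_min le_max; apply/andP; split; apply/orP; [left|right]; lra.
have [t2 t2i Ft2] : exists2 t2, t2 \in `[tm d, 1] & F t2 = L.
  apply: IVT; first exact: ltW.
    apply: F_within => x; rewrite !in_itv /= => /andP[x0 _]; rewrite andbT.
    exact: lt_le_trans tm0 x0.
  rewrite F1 ge_min le_max; apply/andP; split; apply/orP; [right|left]; lra.
move: t1i t2i; rewrite !in_itv /= => /andP[et1 t1tm] /andP[tmt2 t21].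
have t1tm' : t1 < tm d.
  by rewrite lt_neqAle t1tm andbT; apply/eqP => h; move: HFtm; rewrite -h; lra.
have tmt2' : tm d < t2.
  by rewrite lt_neqAle tmt2 andbT; apply/eqP => h; move: HFtm; rewrite h; lra.
have t21' : t2 < 1.
  by rewrite lt_neqAle t21 andbT; apply/eqP => h; move: Ft2; rewrite h F1; lra.
have t10 : 0 < t1 by lra.
exists t1, t2; split; first by split => //; lra.
split => //.
- move=> t /andP[t0 tt1]; rewrite -Ft1; apply: (F_incr hd p0) => //;
    rewrite in_itv /= ?t0 ?t10; apply/ltW; lra.
- move=> t /andP[tt1 tt2]; have [ttm|ttm] := leP t (tm d).
    rewrite -Ft1; apply: (F_incr hd p0) => //; rewrite in_itv /= ?t10 ?ttm //.
    by rewrite andbT; lra.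
  rewrite -Ft2; apply: (F_decr hd p0) => //; rewrite in_itv /= ?tmt2 ?(ltW ttm).
    by apply/ltW; lra.
  by apply/ltW; lra.
- move=> t /andP[tt2 t1']; rewrite -Ft2; apply: (F_decr hd p0) => //;
    rewrite in_itv /= ?t1' ?tmt2 ?(ltW t21') //.
  by rewrite andbT; lra.
Qed.

Lemma structC : Phi R < d ->
  exists t0 : R, 0 < t0 < 1 /\
   [/\ forall t, 0 < t < t0 -> L < F t, F t0 = L &
       forall t, t0 < t <= 1 -> F t < L].
Proof.
hyps; move=> hp; have p0 := phi_neg hd hp; have hL := L_gt0.
set ta := (L + 2) `^ p^-1.
have ta0 : 0 < ta by apply: powR_gt0; lra.
have ta1 : ta <= 1.
  apply: (@le_trans _ _ ((L + 2) `^ 0)); last by rewrite powRr0.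
  apply: ler_powR; first lra.
  by rewrite invr_le0; apply: ltW.
have Fta : L < F ta.
  rewrite /Fdelta /ta -powRrM mulVf ?lt_eqF // powRr1; last lra.
  have : ta `^ d <= 1 `^ d.
    apply: ge0_ler_powR; rewrite ?nnegrE ?(ltW ta0) //; lra.
  rewrite powR1 /ta; lra.
have [t0 t0i Ft0] : exists2 t0, t0 \in `[ta, 1] & F t0 = L.
  apply: IVT => //.
    apply: F_within => x; rewrite !in_itv /= => /andP[x0 _]; rewrite andbT.
    exact: lt_le_trans ta0 x0.
  rewrite F1 ge_min le_max; apply/andP; split; apply/orP; [right|left]; lra.
move: t0i; rewrite in_itv /= => /andP[tat0 t01].
have t01' : t0 < 1.
  by rewrite lt_neqAle t01 andbT; apply/eqP => h; move: Ft0; rewrite h F1; lra.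
have t00 : 0 < t0 by lra.
exists t0; split; first by rewrite t00.
split => //.
- move=> t /andP[t0' tt0]; rewrite -Ft0; apply: (F_decrC hd p0) => //;
    rewrite in_itv /= ?t0' ?t00 //; lra.
- move=> t /andP[tt0 t1]; rewrite -Ft0; apply: (F_decrC hd p0) => //;
    rewrite in_itv /= ?t1 ?t00 ?(ltW t01') //; lra.
Qed.

End Struct.

Section Topo.
Variable T : topologicalType.

Lemma sep_open (P Q O1 O2 : set T) : open O1 -> open O2 -> O1 `&` O2 = set0 ->
  P `<=` O1 -> Q `<=` O2 -> separated P Q.
Proof.
move=> o1 o2 dis PO QO.
have key : forall (A B U V : set T), open V -> U `&` V = set0 -> A `<=` U -> B `<=` V ->
    closure A `&` B = set0.
  move=> A B U V oV dUV AU BV; rewrite -subset0 => y [cAy By].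
  have [z [Az Vz]] : A `&` V !=set0.
    by apply: cAy; apply: open_nbhs_nbhs; split => //; exact: BV.
  have : (U `&` V) z by split => //; exact: AU.
  by rewrite dUV.
split; first exact: (key _ _ O1 O2).
rewrite setIC; apply: (key _ _ O2 O1) => //; by rewrite setIC.
Qed.

Lemma comps2 (Z P Q O1 O2 : set T) : Z = P `|` Q -> P !=set0 -> Q !=set0 ->
  connected P -> connected Q -> open O1 -> open O2 -> O1 `&` O2 = set0 ->
  P `<=` O1 -> Q `<=` O2 ->
  [set connected_component Z x | x in Z] = [set P; Q] /\ P <> Q.
Proof.
move=> ZPQ [xp Pxp] [xq Qxq] cP cQ o1 o2 dis PO QO.
have sPQ := sep_open o1 o2 dis PO QO.
have dPQ : forall x, P x -> Q x -> False.
  move=> x Px Qx; have : (O1 `&` O2) x by split; [exact: PO | exact: QO].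
  by rewrite dis.
have compP : forall x, P x -> connected_component Z x = P.
  move=> x Px; apply/seteqP; split; last first.
    by apply: connected_component_max => //; rewrite ZPQ; exact: subsetUl.
  have Zx : Z x by rewrite ZPQ; left.
  have := connected_subset sPQ _ (@component_connected T Z x).
  rewrite -ZPQ => /(_ (@connected_component_sub T Z x)) [//|CQ].
  by exfalso; apply: (dPQ x Px); apply: CQ; exact: connected_component_refl.
have compQ : forall x, Q x -> connected_component Z x = Q.
  move=> x Qx; apply/seteqP; split; last first.
    by apply: connected_component_max => //; rewrite ZPQ; exact: subsetUr.
  have Zx : Z x by rewrite ZPQ; right.
  have := connected_subset sPQ _ (@component_connected T Z x).
  rewrite -ZPQ => /(_ (@connected_component_sub T Z x)) [CP|//].
  by exfalso; apply: (dPQ x); [apply: CP; exact: connected_component_refl|].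
split.
  apply/seteqP; split.
    move=> _ [x Zx <-]; have : (P `|` Q) x by rewrite -ZPQ.
    case=> [Px|Qx].
      by left; exact: compP.
    by right; exact: compQ.
  move=> _ [->|->].
    by exists xp; [rewrite ZPQ; left | exact: compP].
  by exists xq; [rewrite ZPQ; right | exact: compQ].
by move=> ePQ; apply: (dPQ xp Pxp); rewrite -ePQ.
Qed.

End Topo.

Section Opens.
Variable R : realType.

Lemma fst_cont : continuous (@fst R (R * R)).
Proof. move=> x; exact: cvg_fst. Qed.

Lemma snd1_cont : continuous (fun q : R * (R * R) => q.2.1).
Proof.
move=> x; apply: (continuous_comp (f := snd)); [exact: cvg_snd | exact: cvg_fst].
Qed.

Lemma open_pos21 : open [set q : R * (R * R) | 0 < q.2.1].
Proof. exact: ((continuousP _).1 snd1_cont _ (@open_gt R 0)). Qed.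

Lemma open_neg21 : open [set q : R * (R * R) | q.2.1 < 0].
Proof. exact: ((continuousP _).1 snd1_cont _ (@open_lt R 0)). Qed.

Lemma open_lt1 (m : R) : open [set q : R * (R * R) | q.1 < m].
Proof. exact: ((continuousP _).1 fst_cont _ (@open_lt R m)). Qed.

Lemma open_gt1 (m : R) : open [set q : R * (R * R) | m < q.1].
Proof. exact: ((continuousP _).1 fst_cont _ (@open_gt R m)). Qed.

Lemma curve_cont_gen (f g h : R -> R) t : {for t, continuous f} ->
  {for t, continuous g} -> {for t, continuous h} ->
  {for t, continuous (fun t => (f t, (g t, h t)))}.
Proof. move=> cf cg ch; exact: (cvg_pair cf (cvg_pair cg ch)). Qed.

End Opens.

Section Geo.
Variables (R : realType) (k gam d : R).
Hypotheses (hk : 1 < k) (hg : 0 < gam) (hd : 1 < d).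
Ltac hyps := have hk1 := hk; have hg1 := hg; have hd1 := hd.

Local Notation p := (pdelta d).
Local Notation F := (Fdelta d).
Local Notation L := (gam * (1 + k)).
Local Notation c := (cc k gam d).
Local Notation Z := (Zs d gam k).

Lemma cc_eq (t : R) : c t = 1 + (F t - L) / (gam * k).
Proof. hyps; rewrite /cc; field; rewrite !gt_eqF //; lra. Qed.

Lemma cc_lt1 (t : R) : F t < L -> c t < 1.
Proof.
hyps; move=> h; rewrite cc_eq; set u := _ / _.
have hu : u * (gam * k) = F t - L by rewrite /u; field; rewrite !gt_eqF //; lra.
have gk : 0 < gam * k by apply: mulr_gt0; lra.
nra.
Qed.

Lemma cc_gt1 (t : R) : L < F t -> 1 < c t.
Proof.
hyps; move=> h; rewrite cc_eq; set u := _ / _.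
have hu : u * (gam * k) = F t - L by rewrite /u; field; rewrite !gt_eqF //; lra.
have gk : 0 < gam * k by apply: mulr_gt0; lra.
nra.
Qed.

Lemma cc_eq1 (t : R) : F t = L -> c t = 1.
Proof. by move=> h; rewrite cc_eq h subrr mul0r addr0. Qed.

Lemma cc_gtN1 (t : R) : 0 <= F t -> -1 < c t.
Proof.
hyps; move=> h; rewrite cc_eq; set u := _ / _.
have hu : u * (gam * k) = F t - L by rewrite /u; field; rewrite !gt_eqF //; lra.
have gk : 0 < gam * k by apply: mulr_gt0; lra.
nra.
Qed.

Lemma fiber_two (t : R) : 0 < t <= 1 -> F t < L -> two_points (fiber Z t).
Proof.
move=> ht hF; rewrite fiber_in //; apply: two_points_circ.
by rewrite cc_lt1 // cc_gtN1 // F_ge0.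
Qed.

Lemma fiber_one (t : R) : 0 < t <= 1 -> F t = L ->
  fiber Z t = [set (cos (pi / 2), sin (pi / 2))].
Proof. by move=> ht hF; rewrite fiber_in // cc_eq1 // circ1. Qed.

Lemma fiber_empty (t : R) : 0 < t <= 1 -> L < F t -> fiber Z t = set0.
Proof. by move=> ht hF; rewrite fiber_in // circ_gt1 // cc_gt1. Qed.

Lemma Z_le (t x y : R) : Z (t, (x, y)) -> F t <= L.
Proof.
move/(Zs_iff hk hg hd) => [ht hxy hy]; rewrite leNgt; apply/negP => /cc_gt1 h.
have : c t <= 1 by apply: circ_ge; exists (x, y); split.
lra.
Qed.

Definition curve (s t : R) : R * (R * R) := (t, (s * Num.sqrt (1 - c t ^+ 2), c t)).

Lemma cc_le1 (t : R) : F t <= L -> c t <= 1.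
Proof.
rewrite le_eqVlt => /orP[/eqP h|h]; first by rewrite cc_eq1.
exact/ltW/cc_lt1.
Qed.

Lemma curve_Z (s t : R) : s ^+ 2 = 1 -> 0 < t <= 1 -> F t <= L -> Z (curve s t).
Proof.
move=> hs ht hF; apply/(Zs_iff hk hg hd); split => //.
have h1 := cc_le1 hF; have h2 := cc_gtN1 (F_ge0 hd ht).
rewrite exprMn hs mul1r sqr_sqrtr; first by ring.
nra.
Qed.

Lemma Z_curve (q : R * (R * R)) : Z q -> q = curve 1 q.1 \/ q = curve (-1) q.1.
Proof.
case: q => t [x y] /(Zs_iff hk hg hd) [ht hxy hy]; rewrite /curve /= -hy.
have hx : Num.sqrt (1 - y ^+ 2) = `|x| by rewrite -sqrtr_sqr; congr Num.sqrt; lra.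
rewrite hx; have [x0|x0] := leP 0 x.
  by left; rewrite mul1r ger0_norm.
by right; rewrite mulN1r ltr0_norm // opprK.
Qed.

Lemma cc_cont (t : R) : 0 < t -> {for t, continuous c}.
Proof.
move=> t0; rewrite /cc; apply: cvgMr_tmp; apply: cvgB; last exact: cvg_cst.
apply: cvgMr_tmp; exact: F_cont.
Qed.

Lemma curve_cont (s t : R) : 0 < t -> {for t, continuous (curve s)}.
Proof.
move=> t0; apply: curve_cont_gen; [exact: cvg_id| |exact: cc_cont].
apply: cvgMl_tmp.
apply: (continuous_comp (f := fun x => 1 - c x ^+ 2)); last exact: sqrt_continuous.
apply: cvgB; first exact: cvg_cst.
exact: (cvgM (cc_cont t0) (cc_cont t0)).
Qed.

End Geo.

Section Geo2.
Variables (R : realType) (k gam d : R).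
Hypotheses (hk : 1 < k) (hg : 0 < gam) (hd : 1 < d).
Ltac hyps := have hk1 := hk; have hg1 := hg; have hd1 := hd.

Local Notation p := (pdelta d).
Local Notation F := (Fdelta d).
Local Notation L := (gam * (1 + k)).
Local Notation c := (cc k gam d).
Local Notation Z := (Zs d gam k).
Local Notation cv := (curve k gam d).

Definition curves (i : interval R) : set (R * (R * R)) :=
  cv 1 @` [set` i] `|` cv (-1) @` [set` i].

Lemma curve_conn (s : R) (i : interval R) : {subset i <= `]0, +oo[} ->
  connected (cv s @` [set` i]).
Proof.
move=> sub; apply: connected_continuous_connected.
  by apply/connected_intervalP; exact: interval_is_interval.
apply: continuous_in_subspaceT => x /[1!inE] xi; apply: curve_cont.
by have := sub _ xi; rewrite in_itv /= andbT.
Qed.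

Lemma fiber_curve (s : R) (i : interval R) (t : R) : t \in i ->
  fiber (cv s @` [set` i]) t = [set (s * Num.sqrt (1 - c t ^+ 2), c t)].
Proof.
move=> ti; apply/seteqP; split => -[x y]; rewrite /fiber /=.
- by case=> t' t'i [<- <- <-].
- by case=> -> ->; exists t.
Qed.

Lemma curves_conn (i : interval R) (te : R) : {subset i <= `]0, +oo[} ->
  te \in i -> c te = 1 -> connected (curves i).
Proof.
move=> sub tei ce; apply: connectedU; [|exact: curve_conn|exact: curve_conn].
exists (cv 1 te); split; first by exists te.
by exists te => //; rewrite /curve ce expr1n subrr sqrtr0 !mulr0.
Qed.

Lemma Z_split2 (i j : interval R) :
  (forall t, 0 < t <= 1 -> F t <= L -> t \in i \/ t \in j) ->
  (forall t, t \in i -> 0 < t <= 1 /\ F t <= L) ->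
  (forall t, t \in j -> 0 < t <= 1 /\ F t <= L) ->
  Z = curves i `|` curves j.
Proof.
move=> H1 H2 H3; apply/seteqP; split.
- move=> q Zq; have hq := Z_curve hk hg hd Zq.
  case: q Zq hq => t [x y] Zq hq.
  have hF := Z_le hk hg hd Zq.
  have [ht _ _] := (Zs_iff hk hg hd _ _ _).1 Zq.
  case: (H1 t ht hF) => ti; [left|right].
    by case: hq => ->; [left|right]; exists t.
  by case: hq => ->; [left|right]; exists t.
- have hsq : forall s : R, s = 1 \/ s = -1 -> s ^+ 2 = 1.
    by move=> s [->|->]; rewrite ?expr1n ?sqrrN ?expr1n.
  move=> q [[|]|[|]] [t ti <-];
    [have [h1 h2] := H2 t ti|have [h1 h2] := H2 t ti|
     have [h1 h2] := H3 t ti|have [h1 h2] := H3 t ti];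
    apply: curve_Z => //; apply: hsq; by [left|right].
Qed.

Lemma fold_at (t0 : R) : 0 < t0 <= 1 -> F t0 = L -> fold_point d gam k t0 (pi / 2).
Proof.
move=> ht hF; split => //.
  by apply/(gfun0_iff hk hg hd); [case/andP: ht|rewrite sin_pihalf cc_eq1].
by rewrite gfun_derive cos_pihalf mulr0.
Qed.

Lemma local_fiberT (t : R) :
  local_fiber d gam k setT t = fiber Z t.
Proof. by apply/seteqP; split => x /=; [case|]. Qed.

End Geo2.

Lemma disj_21 (R : realType) :
  [set q : R * (R * R) | 0 < q.2.1] `&` [set q | q.2.1 < 0] = set0.
Proof. by apply/seteqP; split => // q [/= h1 h2]; lra. Qed.

Lemma disj_1 (R : realType) (m : R) :
  [set q : R * (R * R) | q.1 < m] `&` [set q | m < q.1] = set0.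
Proof. by apply/seteqP; split => // q [/= h1 h2]; lra. Qed.

Unset Implicit Arguments.
Theorem mainTheorem2 (R : realType) (k gam d : R) :
  1 < k -> 0 < gam -> 1 < d ->
  (* (A) *)
  ((d < Phi R /\ gamma_plus k d < gam) ->
     [/\ (forall t, 0 < t <= 1 -> two_points (fiber (Zs d gam k) t)),
         (forall t s, ~ fold_point d gam k t s) &
         exists A B, [/\ A <> B, components (Zs d gam k) = [set A; B],
           (forall t, 0 < t <= 1 -> one_point (fiber A t)) &
           (forall t, 0 < t <= 1 -> one_point (fiber B t))]]) /\
  (* (B) *)
  ((d < Phi R /\ gam < gamma_plus k d) ->
     exists t1 t2, [/\ 0 < t1, t1 < t2 & t2 < 1] /\
       [/\ (forall t, (0 < t < t1) \/ (t2 < t <= 1) ->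
          two_points (fiber (Zs d gam k) t)),
       (forall t, t = t1 \/ t = t2 ->
          fiber (Zs d gam k) t = [set (cos (pi / 2), sin (pi / 2))]) &
       (forall t, t1 < t < t2 -> fiber (Zs d gam k) t = set0)] /\
       subcritical_fold d gam k t1 (pi / 2) /\
       supercritical_fold d gam k t2 (pi / 2) /\
       exists A B, [/\ A <> B, components (Zs d gam k) = [set A; B],
         A `<=` [set q | q.1 <= t1] & B `<=` [set q | t2 <= q.1]]) /\
  (* (C) *)
  (Phi R < d ->
     exists t0, 0 < t0 < 1 /\
       [/\ (forall t, t < t0 -> fiber (Zs d gam k) t = set0),
       fiber (Zs d gam k) t0 = [set (cos (pi / 2), sin (pi / 2))],
       (forall t, t0 < t <= 1 -> two_points (fiber (Zs d gam k) t)),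
       supercritical_fold d gam k t0 (pi / 2) &
       connected (Zs d gam k)]).
Proof.
move=> hk hg hd.
have hL : 0 < gam * (1 + k) by apply: mulr_gt0; lra.
split; [|split].
- case=> hp hgam.
  have HF := structA hk hg hd hp hgam.
  have Hc : forall t : R, 0 < t <= 1 -> -1 < cc k gam d t < 1.
    move=> t ht; rewrite (cc_lt1 hk hg hd (HF t ht)) andbT.
    exact: (cc_gtN1 hk hg hd (F_ge0 hd ht)).
  split.
  + by move=> t ht; apply: (fiber_two hk hg hd ht (HF t ht)).
  + move=> t s [ht hz hder].
    have hs := (gfun0_iff hk hg hd s (proj1 (andP ht))).1 hz.
    rewrite gfun_derive in hder.
    have tp : 0 < t `^ (d ^+ 2 - d) by apply: powR_gt0; case/andP: ht.
    have hcos : cos s = 0.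
      move/eqP: hder; rewrite !mulf_eq0 (gt_eqF tp) (gt_eqF hg) /=.
      by rewrite gt_eqF /= => [/eqP //|]; lra.
    have := cos2Dsin2 s; rewrite hcos hs => e.
    have := Hc t ht => /andP[h1 h2]; nra.
  + set P := curve k gam d 1 @` [set` `]0, 1]].
    set Q := curve k gam d (-1) @` [set` `]0, 1]].
    exists P, Q.
    have sub : {subset (`]0, 1] : interval R) <= `]0, +oo[}.
      by move=> x; rewrite !in_itv /= => /andP[-> _].
    have Zeq : Zs d gam k = P `|` Q.
      rewrite -[RHS]setUid; apply: (Z_split2 hk hg hd).
      * by move=> t ht _; left; rewrite in_itv.
      * by move=> t; rewrite in_itv /= => ht; split => //; apply/ltW/HF.
      * by move=> t; rewrite in_itv /= => ht; split => //; apply/ltW/HF.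
    have pos : forall t : R, t \in `]0, 1] -> 0 < Num.sqrt (1 - cc k gam d t ^+ 2).
      move=> t; rewrite in_itv /= => ht; rewrite sqrtr_gt0.
      have := Hc t ht => /andP[h1 h2]; nra.
    have i1 : (1 : R) \in `]0, 1] by rewrite in_itv /= ltr01 lexx.
    have nP : P !=set0 by exists (curve k gam d 1 1), 1.
    have nQ : Q !=set0 by exists (curve k gam d (-1) 1), 1.
    have PO : P `<=` [set q | 0 < q.2.1].
      by move=> _ [t ti <-]; rewrite /curve /= mul1r; apply: pos.
    have QO : Q `<=` [set q | q.2.1 < 0].
      by move=> _ [t ti <-]; rewrite /curve /= mulN1r oppr_lt0; apply: pos.
    have [E1 E2] := comps2 Zeq nP nQ (curve_conn sub) (curve_conn sub)
      (@open_pos21 R) (@open_neg21 R) (@disj_21 R) PO QO.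
    split => //.
    * by move=> t ht; rewrite fiber_curve; [eexists|rewrite in_itv].
    * by move=> t ht; rewrite fiber_curve; [eexists|rewrite in_itv].
- case=> hp hgam.
  have [t1 [t2 [[t10 t12 t21] [HF1 Ft1 HF2 Ft2 HF3]]]] := structB hk hg hd hp hgam.
  exists t1, t2; split; first by [].
  have fib2 : forall t, (0 < t < t1) \/ (t2 < t <= 1) -> two_points (fiber (Zs d gam k) t).
    move=> t [/andP[ta tb]|/andP[ta tb]].
      by apply: (fiber_two hk hg hd) => //; [apply/andP; split; lra | apply: HF1; rewrite ta tb].
    by apply: (fiber_two hk hg hd) => //; [apply/andP; split; lra | apply: HF3; rewrite ta tb].
  have fib1 : forall t, t = t1 \/ t = t2 ->
      fiber (Zs d gam k) t = [set (cos (pi / 2), sin (pi / 2))].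
    by move=> t [->|->]; apply: (fiber_one hk hg hd) => //; apply/andP; split; lra.
  have fib0 : forall t, t1 < t < t2 -> fiber (Zs d gam k) t = set0.
    move=> t /andP[ta tb]; apply: (fiber_empty hk hg hd); first by apply/andP; split; lra.
    by apply: HF2; rewrite ta tb.
  split; first by split.
  split.
    split; first by apply: (fold_at hk hg hd) => //; apply/andP; split; lra.
    exists setT; split; first exact: filterT.
    exists (Num.min t1 (t2 - t1)); first by rewrite lt_min t10 subr_gt0.
    have m1 : Num.min t1 (t2 - t1) <= t1 by rewrite ge_min lexx.
    have m2 : Num.min t1 (t2 - t1) <= t2 - t1 by rewrite ge_min lexx orbT.
    split.
    + move=> t /andP[ta tb]; rewrite local_fiberT; apply: fib2; left; apply/andP; split; lra.
    + by rewrite local_fiberT fib1; [eexists|left].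
    + move=> t /andP[ta tb]; rewrite local_fiberT; apply: fib0; apply/andP; split; lra.
  split.
    split; first by apply: (fold_at hk hg hd) => //; apply/andP; split; lra.
    exists setT; split; first exact: filterT.
    exists (Num.min (t2 - t1) (1 - t2)); first by rewrite lt_min !subr_gt0 t12 t21.
    have m1 : Num.min (t2 - t1) (1 - t2) <= t2 - t1 by rewrite ge_min lexx.
    have m2 : Num.min (t2 - t1) (1 - t2) <= 1 - t2 by rewrite ge_min lexx orbT.
    split.
    + move=> t /andP[ta tb]; rewrite local_fiberT; apply: fib2; right; apply/andP; split; lra.
    + by rewrite local_fiberT fib1; [eexists|right].
    + move=> t /andP[ta tb]; rewrite local_fiberT; apply: fib0; apply/andP; split; lra.
  set P := curves k gam d `]0, t1].
  set Q := curves k gam d `[t2, 1].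
  exists P, Q.
  have sub1 : {subset (`]0, t1] : interval R) <= `]0, +oo[}.
    by move=> x; rewrite !in_itv /= => /andP[-> _].
  have sub2 : {subset (`[t2, 1] : interval R) <= `]0, +oo[}.
    by move=> x; rewrite !in_itv /= => /andP[h _]; lra.
  have Zeq : Zs d gam k = P `|` Q.
    apply: (Z_split2 hk hg hd).
    * move=> t /andP[ta tb] hF.
      have [h|h] := leP t t1; first by left; rewrite in_itv /= ta h.
      right; rewrite in_itv /= tb andbT leNgt; apply/negP => h'.
      have := HF2 t; rewrite h h' => /(_ isT); lra.
    * move=> t; rewrite in_itv /= => /andP[ta tb]; split; first by apply/andP; split; lra.
      have [h|h] := ltP t t1; first by apply/ltW/HF1; rewrite ta h.
      have -> : t = t1 by lra.
      by rewrite Ft1.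
    * move=> t; rewrite in_itv /= => /andP[ta tb]; split; first by apply/andP; split; lra.
      have [h|h] := ltP t2 t; first by apply/ltW/HF3; rewrite h tb.
      have -> : t = t2 by lra.
      by rewrite Ft2.
  have c1 : cc k gam d t1 = 1 by apply: (cc_eq1 hk hg hd).
  have c2 : cc k gam d t2 = 1 by apply: (cc_eq1 hk hg hd).
  have i1 : t1 \in (`]0, t1] : interval R) by rewrite in_itv /= t10 lexx.
  have i2 : t2 \in (`[t2, 1] : interval R) by rewrite in_itv /= lexx ltW.
  have nP : P !=set0 by exists (curve k gam d 1 t1); left; exists t1.
  have nQ : Q !=set0 by exists (curve k gam d 1 t2); left; exists t2.
  have PO : P `<=` [set q | q.1 < (t1 + t2) / 2].
    by move=> _ [] [t ti <-]; move: ti; rewrite /= in_itv /= => /andP[_ h]; lra.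
  have QO : Q `<=` [set q | (t1 + t2) / 2 < q.1].
    by move=> _ [] [t ti <-]; move: ti; rewrite /= in_itv /= => /andP[h _]; lra.
  have [E1 E2] := comps2 Zeq nP nQ (curves_conn sub1 i1 c1) (curves_conn sub2 i2 c2)
    (@open_lt1 R ((t1 + t2) / 2)) (@open_gt1 R ((t1 + t2) / 2)) (@disj_1 R ((t1 + t2) / 2)) PO QO.
  split => //.
    by move=> _ [] [t ti <-]; move: ti; rewrite /= in_itv /= => /andP[_ h].
  by move=> _ [] [t ti <-]; move: ti; rewrite /= in_itv /= => /andP[h _].
- move=> hp.
  have [t0 [/andP[t00 t01] [HF1 Ft0 HF3]]] := structC hk hg hd hp.
  exists t0; split; first by rewrite t00 t01.
  have fib2 : forall t, t0 < t <= 1 -> two_points (fiber (Zs d gam k) t).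
    move=> t /andP[ta tb].
    by apply: (fiber_two hk hg hd) => //; [apply/andP; split; lra | apply: HF3; rewrite ta tb].
  have fib1 : fiber (Zs d gam k) t0 = [set (cos (pi / 2), sin (pi / 2))].
    by apply: (fiber_one hk hg hd) => //; apply/andP; split; lra.
  have fib0 : forall t, t < t0 -> fiber (Zs d gam k) t = set0.
    move=> t tt0; have [t0'|t0'] := leP t 0.
      by apply: (fiber_out hk hg hd); case/andP => h _; lra.
    apply: (fiber_empty hk hg hd); first by apply/andP; split; lra.
    by apply: HF1; rewrite t0' tt0.
  split => //.
    split; first by apply: (fold_at hk hg hd) => //; apply/andP; split; lra.
    exists setT; split; first exact: filterT.
    exists (1 - t0); first by rewrite subr_gt0.
    split.
    + move=> t /andP[ta tb]; rewrite local_fiberT; apply: fib2; apply/andP; split; lra.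
    + by rewrite local_fiberT fib1; eexists.
    + move=> t /andP[ta tb]; rewrite local_fiberT; apply: fib0; lra.
  have sub : {subset (`[t0, 1] : interval R) <= `]0, +oo[}.
    by move=> x; rewrite !in_itv /= => /andP[h _]; lra.
  have Zeq : Zs d gam k = curves k gam d `[t0, 1].
    rewrite -[RHS]setUid; apply: (Z_split2 hk hg hd).
    * move=> t /andP[ta tb] hF; left; rewrite in_itv /= tb andbT leNgt.
      apply/negP => h; have := HF1 t; rewrite ta h => /(_ isT); lra.
    * move=> t; rewrite in_itv /= => /andP[ta tb]; split; first by apply/andP; split; lra.
      have [h|h] := ltP t0 t; first by apply/ltW/HF3; rewrite h tb.
      have -> : t = t0 by lra.
      by rewrite Ft0.
    * move=> t; rewrite in_itv /= => /andP[ta tb]; split; first by apply/andP; split; lra.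
      have [h|h] := ltP t0 t; first by apply/ltW/HF3; rewrite h tb.
      have -> : t = t0 by lra.
      by rewrite Ft0.
  rewrite Zeq; apply: (curves_conn sub (te := t0)).
    by rewrite in_itv /= lexx ltW.
  exact: (cc_eq1 hk hg hd).
Qed.
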